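(* For an integer $q\geq 2$ and arbitrary positive integers $c$ and $d$, $$P\big(S(c,\underbrace{d,\dots,d}_{q}),\lambda\big)=\mathbf{P}_d^{\,q-1}\left(\mathbf{P}_{c+d+1}-(q-1)\mathbf{P}_c\mathbf{P}_{d-1}\right).$$
   Context: For a graph $G$, $P(G,\lambda)=\det(\lambda I-A(G))$ is the characteristic polynomial of its adjacency matrix $A(G)$. $\mathbf{P}_m$ denotes $P(P_m,\lambda)$, the characteristic polynomial of the path $P_m$ on $m$ vertices, with the convention $\mathbf{P}_0=1$. For positive integers $c_1,\dots,c_m$, the starlike tree $S(c_1,\dots,c_m)$ is obtained from disjoint paths $P_{c_1+1},\dots,P_{c_m+1}$ by identifying one end vertex of each path into a single vertex (the center); the resulting pendant paths are the branches, of lengths $c_1,\dots,c_m$. *)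

(* Defs.v *)
From mathcomp Require Import all_boot all_order all_algebra.
Set Implicit Arguments. Unset Strict Implicit. Unset Printing Implicit Defensive.
Import GRing.Theory.
Local Open Scope ring_scope.

Definition adj_mx (n : nat) (E : seq (nat * nat)) : 'M[int]_n :=
  \matrix_(i < n, j < n)
    (((nat_of_ord i, nat_of_ord j) \in E) || ((nat_of_ord j, nat_of_ord i) \in E))%:R.

Definition charpoly_graph (n : nat) (E : seq (nat * nat)) : {poly int} :=
  char_poly (adj_mx n E).

Definition path_edges (m : nat) : seq (nat * nat) :=
  [seq (k, k.+1) | k <- iota 0 m.-1].

(* bold P_m; for m = 0 this is the char. poly of the empty matrix, i.e. 1. *)
Definition Ppath (m : nat) : {poly int} := charpoly_graph m (path_edges m).

(* Starlike tree S(c_1,...,c_m): vertex 0 is the center; branch i (0-based)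
   occupies vertices start i, start i + 1, ..., start i + c_i - 1, where
   start i = 1 + c_1 + ... + c_i (previous branches), listed by increasing
   distance from the center. *)
Definition branch_start (cs : seq nat) (i : nat) : nat := 1 + sumn (take i cs).

Definition branch_edges (cs : seq nat) (i : nat) : seq (nat * nat) :=
  (0%N, branch_start cs i) ::
  [seq (branch_start cs i + k, (branch_start cs i + k).+1)%N | k <- iota 0 (nth 0%N cs i).-1].

Definition starlike_edges (cs : seq nat) : seq (nat * nat) :=
  flatten [seq branch_edges cs i | i <- iota 0 (size cs)].

Definition starlike_order (cs : seq nat) : nat := (1 + sumn cs)%N.

Definition P_starlike (cs : seq nat) : {poly int} :=
  charpoly_graph (starlike_order cs) (starlike_edges cs).

(* Main.v *)
Require Import Defs.
From mathcomp Require Import all_boot all_order all_algebra.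
From mathcomp Require Import zify ring.
Set Implicit Arguments. Unset Strict Implicit. Unset Printing Implicit Defensive.
Import GRing.Theory.
Local Open Scope ring_scope.


Definition Mr (n : nat) (r : nat -> nat -> bool) : 'M[int]_n :=
  \matrix_(i < n, j < n) (r i j)%:R.
Definition G n r : {poly int} := char_poly (Mr n r).

Lemma cpmxE n r (i j : 'I_n) :
  char_poly_mx (Mr n r) i j = 'X *+ (i == j) - ((r i j)%:R)%:P.
Proof. by rewrite !mxE. Qed.

Lemma G_ext n r r' : (forall i j, (i < n)%N -> (j < n)%N -> r i j = r' i j) ->
  G n r = G n r'.
Proof.
move=> H; rewrite /G; congr (char_poly _); apply/matrixP => i j.
by rewrite !mxE H.
Qed.

Lemma G_split m n r :
  (forall i j, (i < m)%N -> (m <= j < m + n)%N -> r i j = false /\ r j i = false) ->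
  G (m + n)%N r = G m r * G n (fun i j => r (m + i)%N (m + j)%N).
Proof.
move=> H; rewrite /G /char_poly -(det_ublock _ 0); congr (\det _).
apply/matrixP => i j.
case: (split_ordP i) => i' ->; case: (split_ordP j) => j' ->;
  rewrite ?block_mxEul ?block_mxEur ?block_mxEdl ?block_mxEdr !cpmxE ?mxE //=.
- have -> : (lshift n i' == rshift m j') = false.
    by apply/negbTE; rewrite -val_eqE /= neq_ltn (leq_trans (ltn_ord i') (leq_addr _ _)).
  case: (H i' (m + j')%N (ltn_ord i')) => [|-> _].
    by apply/andP; split; [exact: leq_addr | by rewrite ltn_add2l].
  by rewrite subr0.
- have -> : (rshift m i' == lshift n j') = false.
    by apply/negbTE; rewrite -val_eqE /= neq_ltn (leq_trans (ltn_ord j') (leq_addr _ _)) orbT.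
  case: (H j' (m + i')%N (ltn_ord j')) => [|_ ->].
    by apply/andP; split; [exact: leq_addr | by rewrite ltn_add2l].
  by rewrite subr0.
- by rewrite (inj_eq (@rshift_inj _ _)).
Qed.

Lemma cpmxE' n r (i j : 'I_n) :
  char_poly_mx (Mr n r) i j = 'X *+ (nat_of_ord i == nat_of_ord j) - ((r i j)%:R)%:P.
Proof. by rewrite cpmxE val_eqE. Qed.

Lemma bump_lt h i : (i < h)%N -> bump h i = i.
Proof. by move=> hi; rewrite /bump leqNgt hi. Qed.

Lemma bump_ge h i : (h <= i)%N -> bump h i = i.+1.
Proof. by move=> hi; rewrite /bump hi add1n. Qed.

Lemma G_leaf n k r : (k <= n)%N ->
  (forall u, (u <= n.+1)%N -> r n.+1 u = (u == k)) ->
  (forall u, (u <= n.+1)%N -> r u n.+1 = (u == k)) ->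
  G n.+2 r = 'X * G n.+1 r - G n (fun i j => r (bump k i) (bump k j)).
Proof.
move=> hk H1 H2.
rewrite /G /char_poly (expand_det_row _ ord_max) big_ord_recr /= addrC.
congr (_ + _).
  rewrite /cofactor cpmxE' /= eqxx H1 // (_ : (n.+1 == k) = false); last first.
    by apply/negbTE; rewrite neq_ltn ltnS hk orbT.
  rewrite subr0 -signr_odd addnn odd_double expr0 mul1r; congr (_ * \det _).
  apply/matrixP => i j; rewrite !mxE /= -val_eqE /= !bump_lt //.
rewrite (bigD1 (Ordinal (hk : (k < n.+1)%N))) //= big1 ?addr0; last first.
  move=> j /negbTE hj; rewrite cpmxE' /= (@gtn_eqF j n.+1) // H1; last exact: ltnW.
  by rewrite -val_eqE /= in hj; rewrite hj subr0 mul0r.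
rewrite cpmxE' /= (@gtn_eqF k n.+1) // H1; last exact: ltnW.
rewrite eqxx.
rewrite sub0r mulN1r /cofactor (expand_det_col _ ord_max).
rewrite (bigD1 (Ordinal (hk : (k < n.+1)%N))) //= big1 ?addr0; last first.
  move=> i /negbTE hi; rewrite !mxE -val_eqE /= (bump_lt (ltn_ord i)) (bump_ge hk).
  rewrite (@ltn_eqF i n.+1) // H2; last exact: ltnW.
  by rewrite -val_eqE /= in hi; rewrite hi subr0 mul0r.
rewrite !mxE -val_eqE /= (bump_lt (hk : (k < n.+1)%N)) (bump_ge hk) (@ltn_eqF k n.+1) // H2; last exact: ltnW.
rewrite eqxx sub0r mulN1r /cofactor /=.
rewrite mulrN mulrA -exprD -signr_odd.
have -> : (n.+1 + k + (k + n) = ((n + k).*2).+1)%N by rewrite -addnn; lia.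
rewrite /= odd_double /= expr1 mulN1r opprK; congr (- \det _).
apply/matrixP => i j; rewrite !mxE -val_eqE /= (bump_lt (ltn_ord j)).
have hb : (bump k i < n.+1)%N.
  rewrite /bump; case: (k <= i)%N; rewrite /= ?add0n ?add1n ltnS //; exact: ltnW.
by rewrite (bump_lt hb) (inj_eq (can_inj (bumpK k))).
Qed.


Lemma bsS c q d i : (i <= q)%N -> branch_start (c :: nseq q d) i.+1 = (1 + c + i * d)%N.
Proof. by move=> h; rewrite /branch_start /= take_nseq // sumn_nseq mulnC addnA. Qed.

Lemma memSE c q d x y : (0 < c)%N ->
  ((x, y) \in starlike_edges (c :: nseq q d)) <->
  [\/ x = 0%N /\ y = 1%N,
      [/\ (1 <= x)%N, (x < c)%N & y = x.+1],
      exists2 i, (i < q)%N & x = 0%N /\ y = (1 + c + i * d)%N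
    | exists i k, [/\ (i < q)%N, (k.+1 < d)%N, x = (1 + c + i * d + k)%N & y = x.+1]].
Proof.
move=> hc; rewrite /starlike_edges; split.
- case/flatten_mapP => i; rewrite mem_iota add0n /= size_nseq => hi.
  rewrite /branch_edges in_cons => /orP [/eqP [-> ->]|/mapP [k hk [-> ->]]].
  + case: i hi => [|i] hi; first by constructor 1; rewrite /branch_start.
    by constructor 3; exists i => //; rewrite bsS // ltnW.
  + rewrite mem_iota add0n in hk.
    case: i hi hk => [|i] hi hk.
      constructor 2; rewrite /branch_start /=; rewrite /= in hk; split => //=; lia.
    constructor 4; exists i, k; rewrite /= nth_nseq (_ : (i < q)%N) // in hk.
    rewrite bsS; last exact: ltnW. split; lia.
- case=> [[-> ->]|[h1 h2 ->]|[i hi [-> ->]]|[i [k [hi hk -> ->]]]].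
  + apply/flatten_mapP; exists 0%N; first by rewrite mem_iota.
    by rewrite /branch_edges mem_head.
  + apply/flatten_mapP; exists 0%N; first by rewrite mem_iota.
    rewrite /branch_edges in_cons; apply/orP; right; apply/mapP.
    exists x.-1; first by rewrite mem_iota /=; lia.
    rewrite /branch_start /=; congr (_, _); lia.
  + apply/flatten_mapP; exists i.+1; first by rewrite mem_iota /= size_nseq; lia.
    by rewrite /branch_edges bsS ?mem_head // ltnW.
  + apply/flatten_mapP; exists i.+1; first by rewrite mem_iota /= size_nseq; lia.
    rewrite /branch_edges bsS; last exact: ltnW.
    rewrite in_cons; apply/orP; right; apply/mapP; exists k.
      by rewrite mem_iota /= nth_nseq hi; lia.
    by [].
Qed.


Lemma nomul i j d e : (0 < e)%N -> (e < d)%N -> (j * d + e)%N = (i * d)%N -> False.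
Proof.
move=> h1 h2 h3; case: (leqP i j) => h.
- have : (i * d <= j * d)%N by rewrite leq_mul2r h orbT.
  lia.
- have : (j.+1 * d <= i * d)%N by rewrite leq_mul2r h orbT.
  rewrite mulSn; lia.
Qed.

Definition rs c q d := fun i j =>
  ((i, j) \in starlike_edges (c :: nseq q d)) || ((j, i) \in starlike_edges (c :: nseq q d)).

Lemma rsC c q d x y : rs c q d x y = rs c q d y x.
Proof. by rewrite /rs orbC. Qed.

Section F.
Variables (c q d : nat).
Hypothesis hc : (0 < c)%N.
Local Notation r := (rs c q d).

Lemma F2 j e u : (j < q)%N -> (0 < e)%N -> (e < d)%N -> (u <= 1 + c + j * d + e)%N ->
  r (1 + c + j * d + e)%N u = (u == c + j * d + e)%N.
Proof.
move=> hj h1 h2 hu; apply/idP/eqP.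
- case/orP => /(memSE _ _ _ _ hc) [[? ?]|[? ? ?]|[i hi [? ?]]|[i [k [hi hk ? ?]]]]; try lia.
  exfalso; apply: (@nomul i j d e) => //; lia.
- move=> ->; apply/orP; right; apply/(memSE _ _ _ _ hc); constructor 4.
  exists j, e.-1; split => //; lia.
Qed.

Lemma F3 j u : (j < q)%N -> (u <= 1 + c + j * d)%N ->
  r (1 + c + j * d)%N u = (u == 0)%N.
Proof.
move=> hj hu; apply/idP/eqP.
- case/orP => /(memSE _ _ _ _ hc) [[? ?]|[? ? ?]|[i hi [? ?]]|[i [k [hi hk ? ?]]]]; try lia.
  exfalso; apply: (@nomul j i d k.+1) => //; lia.
- move=> ->; apply/orP; right; apply/(memSE _ _ _ _ hc); constructor 3.
  by exists j.
Qed.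

Definition rpath (i j : nat) := (j == i.+1) || (i == j.+1).

Lemma F1 x y : (x < c.+1)%N -> (y < c.+1)%N -> r x y = rpath x y.
Proof.
move=> hx hy; apply/idP/idP.
- case/orP => /(memSE _ _ _ _ hc) [[? ?]|[? ? ?]|[i hi [? ?]]|[i [k [hi hk ? ?]]]];
  apply/orP; lia.
- case/orP => /eqP E; [subst y|subst x]; apply/orP; [left|right]; apply/(memSE _ _ _ _ hc).
  + case: x hx hy => [|x] hx hy; [by constructor 1|constructor 2; split => //; lia].
  + case: y hy hx => [|y] hy hx; [by constructor 1|constructor 2; split => //; lia].
Qed.

Lemma F4a j x y : (j < q)%N -> (x < c + j * d)%N -> (c + j * d <= y < c + j * d + d)%N ->
  r x.+1 y.+1 = false.
Proof.
move=> hj hx /andP [hy1 hy2]; apply/negbTE/negP.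
case/orP => /(memSE _ _ _ _ hc) [[? ?]|[? ? ?]|[i hi [? ?]]|[i [k [hi hk ? ?]]]]; try lia.
exfalso; apply: (@nomul j i d k.+1) => //; lia.
Qed.

Lemma F4b j x y : (j < q)%N -> (x < d)%N -> (y < d)%N ->
  r (c + j * d + x).+1 (c + j * d + y).+1 = rpath x y.
Proof.
move=> hj hx hy; apply/idP/idP.
- case/orP => /(memSE _ _ _ _ hc) [[? ?]|[? ? ?]|[i hi [? ?]]|[i [k [hi hk ? ?]]]];
  apply/orP; lia.
- case/orP => /eqP E; [subst y|subst x]; apply/orP; [left|right]; apply/(memSE _ _ _ _ hc); constructor 4.
  + by exists j, x; split => //; lia.
  + by exists j, y; split => //; lia.
Qed.
End F.


Lemma mem_pe m i j : ((i, j) \in path_edges m) = (j == i.+1) && (i < m.-1)%N.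
Proof.
apply/mapP/andP => [[k hk [-> ->]]|[/eqP -> h]].
  by rewrite mem_iota in hk; split => //; lia.
by exists i => //; rewrite mem_iota; lia.
Qed.

Lemma Ppath_G m : Ppath m = G m rpath.
Proof.
transitivity (G m (fun i j => ((i,j) \in path_edges m) || ((j,i) \in path_edges m))); first by [].
apply: G_ext => i j hi hj.
rewrite !mem_pe /rpath; apply/idP/idP.
  by case/orP => /andP [-> _]; rewrite ?orbT.
by case/orP=> /eqP h; apply/orP; [left|right]; apply/andP; split => //; apply/eqP; lia.
Qed.

Lemma P0 : Ppath 0 = 1.
Proof. by rewrite Ppath_G /G /char_poly det_mx00. Qed.

Lemma P1 : Ppath 1 = 'X.
Proof. by rewrite Ppath_G /G /char_poly det_mx11 cpmxE' /= subr0. Qed.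

Lemma PS2 m : Ppath m.+2 = 'X * Ppath m.+1 - Ppath m.
Proof.
rewrite !Ppath_G (@G_leaf m m) //.
- congr (_ - _); apply: G_ext => i j hi hj; by rewrite !bump_lt.
- by move=> u hu; rewrite /rpath eqSS; case: (ltngtP u m.+2) => //; lia.
- by move=> u hu; rewrite /rpath eqSS; case: (ltngtP u m.+2) => //; lia.
Qed.

Definition Q e := if e is e'.+1 then Ppath e' else 0.

Lemma PS m : Ppath m.+1 = 'X * Ppath m - Q m.
Proof. by case: m => [|m]; rewrite ?PS2 //= P1 P0 mulr1 subr0. Qed.

Lemma Padd m e : Ppath (m + e)%N = Ppath m * Ppath e - Q m * Q e.
Proof.
have H : forall k, Ppath (m + k)%N = Ppath m * Ppath k - Q m * Q k /\
   Ppath (m + k.+1)%N = Ppath m * Ppath k.+1 - Q m * Q k.+1.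
  elim => [|k [IH1 IH2]].
    by rewrite addn0 addn1 /= P0 P1 mulr0 subr0 mulr1 mulr1 PS mulrC.
  split => //; rewrite !addnS PS2 -addnS IH2 IH1 PS2 /=.
  rewrite PS; ring.
by case: (H e).
Qed.


Section Main.
Variables (c q d : nat).
Hypotheses (hc : (0 < c)%N) (hd : (0 < d)%N).
Local Notation r := (rs c q d).

Lemma rpathS x y : rpath x.+1 y.+1 = rpath x y.
Proof. by rewrite /rpath !eqSS. Qed.

Lemma Bj j : (j <= q)%N ->
  G (c + j * d)%N (fun x y => r x.+1 y.+1) = Ppath c * Ppath d ^+ j.
Proof.
elim: j => [|j IH] hj.
  rewrite mul0n addn0 expr0 mulr1 Ppath_G; apply: G_ext => x y hx hy.
  by rewrite F1 // rpathS.
rewrite mulSnr addnA G_split.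
  rewrite IH; last exact: ltnW.
  have -> : G d (fun i j0 : nat => r (c + j * d + i).+1 (c + j * d + j0).+1) = Ppath d.
    by rewrite Ppath_G; apply: G_ext => x y hx hy; rewrite F4b.
  by rewrite exprS; ring.
move=> x y hx hy; rewrite (rsC _ _ _ y.+1) (F4a hc hj hx hy); split=> //.
Qed.

Lemma branch j e : (j < q)%N -> (e <= d)%N ->
  G ((c + j * d).+1 + e)%N r =
  Ppath e * G (c + j * d).+1 r - Q e * G (c + j * d)%N (fun x y => r x.+1 y.+1).
Proof.
move=> hj.
suff H : forall e, (e.+1 <= d)%N ->
  G ((c + j * d).+1 + e)%N r =
    Ppath e * G (c + j * d).+1 r - Q e * G (c + j * d)%N (fun x y => r x.+1 y.+1) /\
  G ((c + j * d).+1 + e.+1)%N r =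
    Ppath e.+1 * G (c + j * d).+1 r - Q e.+1 * G (c + j * d)%N (fun x y => r x.+1 y.+1).
  case: e => [|e] he; first by rewrite addn0 P0 mul1r /= mul0r subr0.
  by case: (H e he).
clear e; elim => [|e IH] he.
  split; first by rewrite addn0 P0 mul1r /= mul0r subr0.
  rewrite addn1 (@G_leaf (c + j * d) 0) //.
  - rewrite P1 /= P0 mul1r; congr (_ - _); apply: G_ext => x y _ _.
  - move=> u hu; have E : (c + j * d).+1 = (1 + c + j * d)%N by lia.
    by rewrite E F3 // -E.
  - move=> u hu; have E : (c + j * d).+1 = (1 + c + j * d)%N by lia.
    by rewrite rsC E F3 // -E.
case: IH => [|IH1 IH2]; first exact: ltnW.
split => //.
have E0 : ((c + j * d).+1 + e.+2)%N = ((c + j * d).+1 + e).+2 by lia.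
have E1 : ((c + j * d).+1 + e).+1 = (1 + c + j * d + e.+1)%N by lia.
have E2 : ((c + j * d).+1 + e)%N = (c + j * d + e.+1)%N by lia.
rewrite E0 (@G_leaf _ ((c + j * d).+1 + e)) //.
- rewrite -addnS IH2.
  have -> : G ((c + j * d).+1 + e) (fun i j0 => r (bump ((c + j * d).+1 + e) i) (bump ((c + j * d).+1 + e) j0)) =
     G ((c + j * d).+1 + e) r.
    by apply: G_ext => x y hx hy; rewrite !bump_lt.
  rewrite IH1 PS2 /= PS; ring.
- move=> u hu; rewrite E1 F2 //; first by rewrite E2.
  by rewrite -E1.
- move=> u hu; rewrite rsC E1 F2 //; first by rewrite E2.
  by rewrite -E1.
Qed.

Lemma stepA j : (j < q)%N ->
  G (c + j.+1 * d).+1 r = Ppath d * G (c + j * d).+1 r - Ppath d.-1 * (Ppath c * Ppath d ^+ j).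
Proof.
move=> hj; have -> : (c + j.+1 * d).+1 = ((c + j * d).+1 + d)%N by rewrite mulSnr; lia.
rewrite branch // Bj; last exact: ltnW.
by case: d hd.
Qed.

Lemma finalA j : (j < q)%N ->
  G (c + j.+1 * d).+1 r =
  Ppath d ^+ j * (Ppath d * Ppath c.+1 - (j.+1)%:R * Ppath d.-1 * Ppath c).
Proof.
elim: j => [|j IH] hj.
  rewrite stepA // mul0n addn0 expr0 mulr1 mul1r (Ppath_G c.+1).
  rewrite (@G_ext _ r rpath); first by rewrite mul1r.
  by move=> x y hx hy; rewrite F1.
rewrite stepA // IH; last exact: ltnW.
rewrite exprS -!natr1; ring.
Qed.
End Main.

Theorem lemma3 (q c d : nat) (hq : (2 <= q)%N) (hc : (0 < c)%N) (hd : (0 < d)%N) :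
  P_starlike (c :: nseq q d) =
  Ppath d ^+ q.-1 * (Ppath (c + d + 1) - (q.-1)%:R * Ppath c * Ppath d.-1).
Proof.
transitivity (G (starlike_order (c :: nseq q d)) (rs c q d)); first by [].
have -> : starlike_order (c :: nseq q d) = (c + q.-1.+1 * d).+1.
  rewrite /starlike_order /= sumn_nseq prednK; last exact: ltnW.
  rewrite mulnC; lia.
rewrite finalA //; last by case: q hq.
change (c + d + 1)%R with (c + d + 1)%N.
have -> : (c + d + 1)%N = (c.+1 + d)%N by lia.
rewrite Padd /=; case: d hd => [//|d'] _ /=.
rewrite -natr1; ring.
Qed.
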